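(* Let $\mathcal{G}=(\mathcal{V},\mathcal{E})$ be connected, $c\in\mathbb{R}^n$, and $D(y)=-(\mathbf{A}c)^\top y-\tfrac12\|\mathbf{A}^\top y\|^2$ for $y\in\mathbb{R}^m$, with $y^*$ any maximizer of $D$. Let $y^0=0$ and, for $t\ge0$, choose an edge $e\in\mathcal{E}$ uniformly at random (independently across iterations) and set $y^{t+1}=y^t+\lambda^tf_e$ with $\lambda^t=\arg\max_{\lambda\in\mathbb{R}}D(y^t+\lambda f_e)$. (Equivalently, with $x^t=c+\mathbf{A}^\top y^t$, the values at the endpoints of $e$ are replaced by their average.) Then for all $k\ge0$ $$\mathbb{E}[D(y^* )-D(y^k)]\le\Big(1-\frac{\alpha(\mathcal{G})}{2m}\Big)^k\big[D(y^* )-D(y^0)\big].$$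
   Context: $\mathcal{G}$ has $n$ vertices $\mathcal{V}=\{1,\dots,n\}$ and $m=|\mathcal{E}|$ edges. $\mathbf{A}\in\mathbb{R}^{m\times n}$ has, for each edge $e=(i,j)$ (fixed orientation), a row with $1$ in column $i$, $-1$ in column $j$ and zeros elsewhere; $f_e\in\mathbb{R}^m$ is the unit basis vector of edge $e$. The algebraic connectivity $\alpha(\mathcal{G})$ is the second smallest eigenvalue of the Laplacian $\mathbf{L}=\mathbf{A}^\top\mathbf{A}$. $\|\cdot\|$ is the Euclidean norm. *)

(* Defs.v *)
From HB Require Import structures.
From mathcomp Require Import all_boot all_order all_algebra.
Set Implicit Arguments. Unset Strict Implicit. Unset Printing Implicit Defensive.
Import Order.TTheory GRing.Theory Num.Theory.
Local Open Scope ring_scope.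

(* A graph on vertices 'I_n with m edges; edge e is the oriented pair E e = (i, j). *)

Definition simple_graph (n m : nat) (E : 'I_m -> 'I_n * 'I_n) : Prop :=
  (forall e, (E e).1 <> (E e).2) /\
  (forall e e', (E e = E e' \/ E e = ((E e').2, (E e').1)) -> e = e').

Definition adj (n m : nat) (E : 'I_m -> 'I_n * 'I_n) : rel 'I_n :=
  fun u v => [exists e, (E e == (u, v)) || (E e == (v, u))].

Definition connected_graph (n m : nat) (E : 'I_m -> 'I_n * 'I_n) : Prop :=
  forall u v : 'I_n, connect (adj E) u v.

Definition incidence (R : pzRingType) (n m : nat) (E : 'I_m -> 'I_n * 'I_n)
  : 'M[R]_(m, n) :=
  \matrix_(e < m, i < n)
    (if i == (E e).1 then 1 else if i == (E e).2 then -1 else 0).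

Definition laplacian (R : comPzRingType) (n m : nat) (E : 'I_m -> 'I_n * 'I_n)
  : 'M[R]_n := (incidence R E)^T *m incidence R E.

Definition sorted_eigenvalues (R : numFieldType) (n : nat) (M : 'M[R]_n)
  (s : seq R) : Prop :=
  sorted <=%R s /\ char_poly M = \prod_(x <- s) ('X - x%:P).

Definition second_smallest_eigenvalue (R : numFieldType) (n : nat)
  (M : 'M[R]_n) (a : R) : Prop :=
  exists s, sorted_eigenvalues M s /\ a = nth 0 s 1.

Definition algebraic_connectivity (R : numFieldType) (n m : nat)
  (E : 'I_m -> 'I_n * 'I_n) (a : R) : Prop :=
  second_smallest_eigenvalue (laplacian R E) a.

Definition sqnorm (R : pzRingType) (p : nat) (v : 'cV[R]_p) : R :=
  \sum_(i < p) v i 0 ^+ 2.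

Definition unitv (R : pzRingType) (m : nat) (e : 'I_m) : 'cV[R]_m :=
  \col_(i < m) (if i == e then 1 else 0).

Definition Dual (R : numFieldType) (n m : nat) (E : 'I_m -> 'I_n * 'I_n)
  (c : 'cV[R]_n) (y : 'cV[R]_m) : R :=
  - ((incidence R E *m c)^T *m y) 0 0
  - 2^-1 * sqnorm ((incidence R E)^T *m y).

(* Y maps each history of chosen edges (first chosen first) to the iterate y^t:
   y^0 = 0, and y^{t+1} = y^t + lambda f_e with lambda a maximizer of
   lambda |-> D(y^t + lambda f_e). *)
Definition rcd_iterates (R : numFieldType) (n m : nat) (E : 'I_m -> 'I_n * 'I_n)
  (c : 'cV[R]_n) (Y : seq 'I_m -> 'cV[R]_m) : Prop :=
  Y [::] = 0 /\
  forall (s : seq 'I_m) (e : 'I_m), exists lam : R,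
    Y (rcons s e) = Y s + lam *: unitv R e /\
    forall mu : R, Dual E c (Y s + mu *: unitv R e) <= Dual E c (Y s + lam *: unitv R e).

(* Main.v *)
Require Import Defs.
From HB Require Import structures.
From mathcomp Require Import all_boot all_order all_algebra.
From mathcomp Require Import complex spectral sesquilinear.
From mathcomp Require Import ring lra.
Set Implicit Arguments. Unset Strict Implicit. Unset Printing Implicit Defensive.
Import Order.TTheory GRing.Theory Num.Theory.
Local Open Scope ring_scope.

Lemma charpoly_conj (F : fieldType) n (P D : 'M[F]_n) : P \in unitmx ->
  char_poly (invmx P *m D *m P) = char_poly D.
Proof.
move=> Pu; rewrite /char_poly /char_poly_mx.
set P' := map_mx polyC P.
have P'u : P' \in unitmx by rewrite map_unitmx.
rewrite !map_mxM map_invmx -/P'.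
have hX : ('X%:M : 'M[{poly F}]_n) = invmx P' *m 'X%:M *m P'.
  by rewrite -mulmxA -scalar_mxC mulmxA mulVmx // mul1mx.
rewrite {1}hX -mulmxBl -mulmxBr !det_mulmx mulrC mulrA -det_mulmx mulmxV //.
by rewrite det1 mul1r.
Qed.

Lemma count_lt_sorted (R : realDomainType) (s : seq R) :
  sorted <=%R s -> (count (fun a => (a < nth 0 s 1)%R) s <= 1)%N.
Proof.
case: s => [//|a [|b t]] /=; first by case: (a < 0)%R.
move=> /andP[_ hp].
have hall := order_path_min (@le_trans _ R) hp.
rewrite ltxx /= (@eq_in_count _ _ pred0) ?count_pred0; first by case: (a < b).
by move=> y /(allP hall) hy /=; rewrite ltNge hy.
Qed.

Section Rayleigh.
Local Open Scope sesquilinear_scope.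
Variable R : rcfType.
Local Notation C := (R[i]).
Local Notation phi := (real_complex R).

Lemma phi_real (a : R) : phi a \is Num.real.
Proof. by apply/complex_realP; exists a. Qed.

Lemma conj_phi (a : R) : (phi a)^*%R = phi a.
Proof. exact/CrealP/phi_real. Qed.

Lemma rayleigh n (L : 'M[R]_n) (s : seq R) (x : 'cV[R]_n) (alpha : R) :
  L^T = L -> sorted <=%R s -> char_poly L = \prod_(a <- s) ('X - a%:P) ->
  alpha = nth 0 s 1 -> 0 < alpha -> L *m (const_mx 1 : 'cV[R]_n) = 0 ->
  \sum_i x i 0 = 0 ->
  alpha * (x^T *m x) 0 0 <= (x^T *m L *m x) 0 0.
Proof.
move=> LT ss hchar ha apos Lker xsum.
set LC := map_mx phi L.
have LCsym : LC \is hermsymmx.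
  apply: realsym_hermsym.
    apply/is_hermitianmxP; rewrite expr0 scale1r map_mx_id // /LC map_trmx LT //.
  by apply/mxOverP => i j; rewrite mxE phi_real.
move/hermitian_normalmx/orthomx_spectralP: (LCsym).
set P := spectralmx LC; set d := spectral_diag LC => LCE.
have Pu : P \is unitarymx := spectral_unitarymx LC.
have Punit : P \in unitmx := spectral_unit LC.
have iP : invmx P = P^t* := invmx_unitary Pu.
have dreal : forall i, d 0 i \is Num.real.
  by move=> i; apply: (mxOverP (hermitian_spectral_diag_real LCsym)).
have hp : perm_eq [seq d 0 i | i <- index_enum 'I_n] (map phi s).
  apply: prod_XsubC_eq.
  rewrite big_map [RHS]big_map -(map_prod_XsubC phi s xpredT (fun a => a)) -hchar map_char_poly -/LC LCE charpoly_conj //.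
  rewrite char_poly_trig ?diag_mx_is_trig //.
  idtac.
  by apply: eq_bigr => i _; rewrite !mxE eqxx mulr1n.
have phia : 0 < phi alpha by rewrite ltcR.
have hc : forall i j, d 0 i < phi alpha -> d 0 j < phi alpha -> i = j.
  move=> i j hi hj; apply/eqP; apply/negPn/negP => hij.
  have := count_lt_sorted ss; rewrite -ha.
  have -> : count (fun a => a < alpha) s = count (fun a => a < phi alpha) (map phi s).
    by rewrite count_map; apply: eq_count => a /=; rewrite ltcR.
  rewrite -(permP hp) count_map.
  have mi : i \in index_enum 'I_n := mem_index_enum i.
  rewrite (permP (perm_to_rem mi)) /= hi.
  have : has (preim (fun i => d 0 i) (fun a => a < phi alpha)) (rem i (index_enum 'I_n)).
    apply/hasP; exists j => //.
    by rewrite (mem_rem_uniq _ (index_enum_uniq _)) inE eq_sym hij mem_index_enum.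
  by rewrite has_count; case: count.
set w := P *m (const_mx 1 : 'cV[C]_n).
have dw : forall i, d 0 i * w i 0 = 0.
  have h0 : diag_mx d *m w = 0.
    have : LC *m (const_mx 1 : 'cV[C]_n) = 0.
      have := congr1 (map_mx phi) Lker.
      by rewrite map_mxM map_const_mx rmorph1 map_mx0.
    rewrite LCE => /(congr1 (mulmx P)).
    by rewrite !mulmxA mulmxV // mul1mx mulmx0.
  move=> i; have := congr1 (fun M : 'cV[C]_n => M i 0) h0.
  by rewrite mul_diag_mx !mxE.
have w0 : forall i, (forall j, j != i -> w j 0 = 0) -> w i 0 != 0.
  move=> i hj; apply/eqP => wi.
  have : w = 0.
    apply/matrixP => a b; rewrite ord1 [RHS]mxE.
    by case: (eqVneq a i) => [->|/hj].
  move=> /(congr1 (mulmx (invmx P))); rewrite /w mulmxA mulVmx // mul1mx mulmx0.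
  by move=> /matrixP/(_ i 0); rewrite !mxE => /eqP; rewrite oner_eq0.
set xr := (map_mx phi x)^T.
set z := xr *m P^t*.
have hz : (z *m w) 0 0 = 0.
  rewrite /z /w mulmxA -[xr *m _ *m P]mulmxA -iP mulVmx // mulmx1.
  rewrite mxE; transitivity (phi (\sum_i x i 0)); last by rewrite xsum rmorph0.
  by rewrite rmorph_sum; apply: eq_bigr => i _; rewrite !mxE mulr1.
have xrc : xr^t* = map_mx phi x.
  by apply/matrixP => i j; rewrite !mxE conj_phi.
have zc : z^t* = P *m xr^t*.
  by rewrite /z trmx_mul map_mxM trmxCK.
have mxphi : forall p q (M : 'M[R]_(p, q)) i j, phi (M i j) = (map_mx phi M) i j.
  by move=> *; rewrite mxE.
have hq1 : phi ((x^T *m x) 0 0) = (z *m z^t*) 0 0.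
  rewrite mxphi map_mxM -map_trmx -/xr -xrc.
  by rewrite zc /z mulmxA -[xr *m _ *m P]mulmxA -iP mulVmx // mulmx1.
have hq2 : phi ((x^T *m L *m x) 0 0) = (z *m diag_mx d *m z^t*) 0 0.
  rewrite mxphi !map_mxM -map_trmx -/xr -xrc.
  by rewrite zc /z -/LC LCE iP !mulmxA.
clearbody z w.
rewrite -lecR rmorphM /= hq1 hq2 mul_mx_diag !mxE mulr_sumr.
apply: ler_sum => i _; rewrite !mxE.
have [hi|hi] := boolP (d 0 i < phi alpha); last first.
  have hle : phi alpha <= d 0 i by rewrite real_leNgt ?phi_real ?dreal.
  by rewrite [X in _ <= X]mulrAC [X in X <= _]mulrC; apply: ler_wpM2l => //; apply: mul_conjC_ge0.
have wj : forall j, j != i -> w j 0 = 0.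
  move=> j hji; apply/eqP/negPn/negP => wj0.
  have dj : d 0 j = 0.
    by have /eqP := dw j; rewrite mulf_eq0 (negbTE wj0) orbF => /eqP.
  by move/eqP: hji; apply; apply: (hc _ _ _ hi); rewrite dj.
have wi := w0 i wj.
have : z 0 i * w i 0 = 0.
  rewrite -hz mxE (bigD1 i) //= big1 ?addr0 // => j hj.
  by rewrite wj ?mulr0.
move/eqP; rewrite mulf_eq0 (negbTE wi) orbF => /eqP ->.
by rewrite !(mul0r, mulr0).
Qed.
End Rayleigh.

Lemma tuple_last (T : Type) k (t : k.+1.-tuple T) :
  tval t = rcons (belast (thead t) (behead t)) (last (thead t) (behead t)).
Proof. by case/tupleP: t => x u /=; rewrite -lastI. Qed.

Lemma sum_tuple_rcons (R : zmodType) (T : finType) k (F : seq T -> R) :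
  \sum_(t : k.+1.-tuple T) F t = \sum_(t : k.-tuple T) \sum_(e : T) F (rcons t e).
Proof.
rewrite pair_bigA /=.
pose h (p : k.-tuple T * T) : k.+1.-tuple T := [tuple of rcons p.1 p.2].
pose g (t : k.+1.-tuple T) : k.-tuple T * T :=
  ([tuple of belast (thead t) (behead t)], last (thead t) (behead t)).
have hg : cancel g h by move=> t; apply: val_inj; rewrite /= -tuple_last.
have gh : cancel h g.
  move=> [u e]; have := tuple_last (h (u, e)); rewrite /= => /esym/rcons_inj [h1 h2].
  by rewrite /g; congr pair => //; apply: val_inj; rewrite /= h1.
rewrite (reindex h) /=; last by exists g => x _.
by apply: eq_bigr => -[u e].
Qed.

Section Main.
Variables (R : rcfType) (n m : nat) (E : 'I_m -> 'I_n * 'I_n).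
Hypothesis hloop : forall e, (E e).1 != (E e).2.
Variable c : 'cV[R]_n.
Local Notation A := (incidence R E).
Definition xv (y : 'cV[R]_m) := c + A^T *m y.

Lemma row_dot (x : 'cV[R]_n) e : \sum_v A e v * x v 0 = x (E e).1 0 - x (E e).2 0.
Proof.
rewrite (bigD1 (E e).1) //= (bigD1 (E e).2) /=; last by rewrite eq_sym hloop.
rewrite big1 ?addr0; last first.
  by move=> v /andP[h1 h2]; rewrite mxE (negbTE h1) (negbTE h2) mul0r.
rewrite !mxE eqxx eq_sym (negbTE (hloop e)) eqxx.
by rewrite mul1r mulN1r.
Qed.

Lemma Ax_entry (x : 'cV[R]_n) e : (A *m x) e 0 = x (E e).1 0 - x (E e).2 0.
Proof. by rewrite mxE row_dot. Qed.

Lemma A_const : A *m (const_mx 1 : 'cV[R]_n) = 0.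
Proof. by apply/matrixP => e j; rewrite ord1 Ax_entry !mxE subrr. Qed.

Lemma Dual_eq y : Dual E c y = (sqnorm c - sqnorm (xv y)) / 2.
Proof.
rewrite /Dual /xv /sqnorm.
set w := A^T *m y.
have -> : ((A *m c)^T *m y) 0 0 = \sum_i c i 0 * w i 0.
  by rewrite trmx_mul -mulmxA mxE; apply: eq_bigr => i _; rewrite !mxE.
have -> : \sum_i (c + w) i 0 ^+ 2 =
    \sum_i c i 0 ^+ 2 + 2 * \sum_i c i 0 * w i 0 + \sum_i w i 0 ^+ 2.
  rewrite mulr_sumr -!big_split /=; apply: eq_bigr => i _; rewrite mxE; ring.
by field.
Qed.

Lemma xv_step y e mu : xv (y + mu *: unitv R e) = xv y + mu *: (A^T *m unitv R e).
Proof. by rewrite /xv mulmxDr scalemxAr addrA. Qed.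

Lemma col_e v e : (A^T *m unitv R e) v 0 = A e v.
Proof.
rewrite mxE (bigD1 e) //= big1 => [|k hk]; last by rewrite !mxE (negbTE hk) mulr0.
by rewrite !mxE eqxx mulr1 addr0.
Qed.

Lemma sqnorm_step (x a : 'cV[R]_n) mu :
  sqnorm (x + mu *: a) = sqnorm x + 2 * mu * \sum_i a i 0 * x i 0 + mu ^+ 2 * sqnorm a.
Proof.
rewrite /sqnorm !mulr_sumr -!big_split /=; apply: eq_bigr => i _; rewrite !mxE; ring.
Qed.

Lemma step_gain y e : Dual E c (y + (- (A *m xv y) e 0 / 2) *: unitv R e) =
  Dual E c y + ((A *m xv y) e 0) ^+ 2 / 4.
Proof.
set d := (A *m xv y) e 0.
rewrite !Dual_eq xv_step sqnorm_step.
have h1 : \sum_i (A^T *m unitv R e) i 0 * xv y i 0 = d.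
  by rewrite /d mxE; apply: eq_bigr => i _; rewrite col_e.
have h2 : sqnorm (A^T *m unitv R e) = 2.
  rewrite /sqnorm (eq_bigr (fun v => A e v * (A^T *m unitv R e) v 0)); last first.
    by move=> v _; rewrite expr2 col_e.
  rewrite row_dot !col_e !mxE eqxx eq_sym (negbTE (hloop e)) eqxx.
  by rewrite opprK.
by rewrite h1 h2; field.
Qed.

Lemma rowsum0 e : \sum_v A e v = 0.
Proof.
have := congr1 (fun M : 'cV[R]_m => M e 0) A_const; rewrite /= [LHS]mxE [RHS]mxE.
by move=> h; rewrite -[RHS]h; apply: eq_bigr => v _; rewrite [const_mx _ _ _]mxE mulr1.
Qed.

Lemma sum_xv y : \sum_v xv y v 0 = \sum_v c v 0.
Proof.
rewrite /xv (eq_bigr (fun v => c v 0 + (A^T *m y) v 0)); last by move=> v _; rewrite mxE.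
rewrite big_split /=.
have -> : \sum_v (A^T *m y) v 0 = \sum_e (\sum_v A e v) * y e 0.
  rewrite (eq_bigr (fun v => \sum_e A e v * y e 0)); last first.
    by move=> v _; rewrite mxE; apply: eq_bigr => e _; rewrite [A^T v e]mxE.
  by rewrite exchange_big; apply: eq_bigr => e _; rewrite mulr_suml.
by rewrite [X in _ + X]big1 ?addr0 // => e _; rewrite rowsum0 mul0r.
Qed.

Lemma var_id (x : 'cV[R]_n) : (0 < n)%N ->
  sqnorm (x - ((\sum_i x i 0) / n%:R) *: const_mx 1) =
  sqnorm x - (\sum_i x i 0) ^+ 2 / n%:R.
Proof.
move=> n0; set S := \sum_i x i 0; set a := S / n%:R.
rewrite /sqnorm.
transitivity (\sum_i (x i 0 ^+ 2 - 2 * a * x i 0 + a ^+ 2)).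
  by apply: eq_bigr => i _; rewrite !mxE; ring.
rewrite big_split /= sumrB -mulr_sumr sumr_const card_ord -/S /a.
have nz : n%:R != 0 :> R by rewrite pnatr_eq0 -lt0n.
rewrite -mulr_natr; by field.
Qed.

Lemma sqnorm_ge0 p (v : 'cV[R]_p) : 0 <= sqnorm v.
Proof. by apply: sumr_ge0 => i _; apply: sqr_ge0. Qed.

Lemma gap_bound y ys : (0 < n)%N ->
  2 * (Dual E c ys - Dual E c y) <=
  sqnorm (xv y - ((\sum_i c i 0) / n%:R) *: const_mx 1).
Proof.
move=> n0; rewrite -(sum_xv y) var_id // sum_xv !Dual_eq.
have := var_id (xv ys) n0; rewrite sum_xv => h.
have := sqnorm_ge0 (xv ys - ((\sum_i c i 0) / n%:R) *: const_mx 1); rewrite h.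
move: (sqnorm (xv ys)) (sqnorm (xv y)) (sqnorm c) ((\sum_i c i 0) ^+ 2 / n%:R).
by move=> a b d f hh; lra.
Qed.

Lemma A_shift (x : 'cV[R]_n) a : A *m (x - a *: const_mx 1) = A *m x.
Proof. by rewrite mulmxBr -scalemxAr A_const scaler0 subr0. Qed.

Lemma sqnormE p (v : 'cV[R]_p) : sqnorm v = (v^T *m v) 0 0.
Proof. by rewrite /sqnorm mxE; apply: eq_bigr => i _; rewrite mxE expr2. Qed.


Lemma one_step alpha (halpha : algebraic_connectivity E alpha) (n0 : (0 < n)%N)
  ys (hys : forall y, Dual E c y <= Dual E c ys) y :
  2 * alpha * (Dual E c ys - Dual E c y) <= sqnorm (A *m xv y).
Proof.
have g0 : 0 <= Dual E c ys - Dual E c y by rewrite subr_ge0.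
have [ap|an] := ltP 0 alpha; last first.
  apply: le_trans (sqnorm_ge0 _); apply: mulr_le0_ge0 => //; lra.
set x' := xv y - ((\sum_i c i 0) / n%:R) *: const_mx 1.
have hg := gap_bound y ys n0; rewrite -/x' in hg.
case: halpha => s [[ss hch] ha].
have LT : (laplacian R E)^T = laplacian R E by rewrite /laplacian trmx_mul trmxK.
have Lker : laplacian R E *m (const_mx 1 : 'cV[R]_n) = 0.
  by rewrite /laplacian -mulmxA A_const mulmx0.
have xs : \sum_i x' i 0 = 0.
  rewrite /x' (eq_bigr (fun i => xv y i 0 - (\sum_i c i 0) / n%:R)); last first.
    by move=> i _; rewrite !mxE mulr1.
  rewrite sumrB sum_xv sumr_const card_ord -[_ *+ n]mulr_natr.
  have nz : n%:R != 0 :> R by rewrite pnatr_eq0 -lt0n.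
  by rewrite divfK // subrr.
have hr := rayleigh LT ss hch ha ap Lker xs.
rewrite -sqnormE /laplacian in hr.
have e : (x'^T *m (A^T *m A) *m x') 0 0 = sqnorm (A *m xv y).
  by rewrite -(A_shift (xv y) ((\sum_i c i 0) / n%:R)) -/x' sqnormE trmx_mul !mulmxA.
rewrite e in hr.
apply: le_trans hr; rewrite -mulrA mulrCA; apply: ler_wpM2l => //; exact: ltW.
Qed.

End Main.

Theorem mainTheorem17 (R : rcfType) (n m : nat) (E : 'I_m -> 'I_n * 'I_n)
  (hn : (2 <= n)%N) (hsimple : simple_graph E) (hconn : connected_graph E)
  (alpha : R) (halpha : algebraic_connectivity E alpha)
  (c : 'cV[R]_n) (ystar : 'cV[R]_m)
  (hystar : forall y : 'cV[R]_m, Dual E c y <= Dual E c ystar)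
  (Y : seq 'I_m -> 'cV[R]_m) (hY : rcd_iterates E c Y) (k : nat) :
  (m%:R ^+ k)^-1 * \sum_(s : k.-tuple 'I_m) (Dual E c ystar - Dual E c (Y s))
    <= (1 - alpha / (2 * m%:R)) ^+ k * (Dual E c ystar - Dual E c 0).
Proof.
have hloop : forall e, (E e).1 != (E e).2 by move=> e; apply/eqP; apply: hsimple.1.
have n0 : (0 < n)%N by apply: leq_trans hn.
case: hY => Y0 hYs.
set G := fun s : seq 'I_m => Dual E c ystar - Dual E c (Y s).
have Gge0 : forall s, 0 <= G s by move=> s; rewrite /G subr_ge0.
have G0 : Dual E c ystar - Dual E c 0 = G [::] by rewrite /G Y0.
have mono : forall s e, G (rcons s e) <= G s.
  move=> s e; rewrite /G; have [lam [-> hmax]] := hYs s e.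
  rewrite lerD2l lerN2; have := hmax 0; by rewrite scale0r addr0.
have step : forall s, \sum_e G (rcons s e) <= (m%:R - alpha / 2) * G s.
  move=> s.
  apply: le_trans (_ : \sum_e (G s - ((incidence R E *m xv E c (Y s)) e 0) ^+ 2 / 4) <= _).
    apply: ler_sum => e _; rewrite {1}/G; have [lam [-> hmax]] := hYs s e.
    have := hmax (- (incidence R E *m xv E c (Y s)) e 0 / 2).
    rewrite step_gain // /G => h; lra.
  rewrite sumrB sumr_const card_ord -mulr_suml.
  have h1 := one_step hloop halpha n0 hystar (Y s).
  rewrite -/(G s) in h1.
  have -> : \sum_e (incidence R E *m xv E c (Y s)) e 0 ^+ 2 =
    sqnorm (incidence R E *m xv E c (Y s)) by [].
  rewrite -mulr_natr; nra.
have sumS : forall k, \sum_(t : k.+1.-tuple 'I_m) G t <=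
    (m%:R - alpha / 2) * \sum_(t : k.-tuple 'I_m) G t.
  by move=> k'; rewrite sum_tuple_rcons mulr_sumr; apply: ler_sum => t _; apply: step.
have sum0 : \sum_(t : 0.-tuple 'I_m) G t = G [::].
  by rewrite (big_pred1 [tuple]) // => t /=; apply/esym/eqP; exact: tuple0.
rewrite G0.
have -> : \sum_(s : k.-tuple 'I_m) (Dual E c ystar - Dual E c (Y s)) =
  \sum_(s : k.-tuple 'I_m) G s by [].
have [m0|mpos] := posnP m.
  subst m; case: k => [|k].
    by rewrite !expr0 invr1 !mul1r sum0.
  rewrite sum_tuple_rcons big1 ?mulr0 => [|t _]; last by rewrite big_ord0.
  by rewrite invr0 mulr0 subr0 expr1n mul1r.
set rho := 1 - alpha / (2 * m%:R).
have mz : m%:R != 0 :> R by rewrite pnatr_eq0 -lt0n.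
have hmr : m%:R - alpha / 2 = m%:R * rho by rewrite /rho; field.
have [rp|rn] := leP 0 rho.
  have ind : forall k, \sum_(t : k.-tuple 'I_m) G t <= (m%:R * rho) ^+ k * G [::].
    elim => [|k' IH]; first by rewrite sum0 expr0 mul1r.
    apply: le_trans (sumS k') _; rewrite hmr exprS -(mulrA (m%:R * rho)); apply: ler_wpM2l => //.
    by apply: mulr_ge0.
  apply: le_trans (ler_wpM2l _ (ind k)) _.
    by rewrite invr_ge0 exprn_ge0.
  by rewrite exprMn !mulrA mulVf ?mul1r // expf_neq0.
have Gz : G [::] = 0.
  have h2 := step [::]; rewrite hmr in h2.
  have h1 : 0 <= \sum_e G (rcons [::] e) by apply: sumr_ge0 => e _.
  have mr : m%:R * rho < 0 by rewrite pmulr_rlt0 // ltr0n.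
  have := Gge0 [::]; move: (G [::]) h2 => g h2 hg.
  apply/eqP; rewrite eq_le hg andbT; nra.
have allz : forall s, G s = 0.
  elim/last_ind => [//|s e IH].
  by apply/eqP; rewrite eq_le Gge0 andbT -IH mono.
by rewrite big1 ?mulr0 ?Gz ?mulr0 // => t _; exact: allz.
Qed.
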